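(* Let $\mathbf A\in\mathbb C^{n\times n}$ with $\operatorname{Ind}\mathbf A=k$ and $\operatorname{rank}\mathbf A^{k+1}=\operatorname{rank}\mathbf A^{k}=r\le n$, let $\mathbf B\in\mathbb C^{n\times m}$, and let $\hat{\mathbf B}=\mathbf A^{k}\mathbf B$ with $j$-th column $\hat{\mathbf b}_{.j}$. Then the Drazin inverse solution $\mathbf X=\mathbf A^{D}\mathbf B=(x_{ij})\in\mathbb C^{n\times m}$ of $\mathbf A\mathbf X=\mathbf B$ satisfies, for all $i=1,\dots,n$, $j=1,\dots,m$, \[x_{ij}=\frac{\sum_{\beta\in J_{r,n}\{i\}}\left|\left(\mathbf A^{k+1}_{.i}(\hat{\mathbf b}_{.j})\right)^{\beta}_{\beta}\right|}{\sum_{\beta\in J_{r,n}}\left|(\mathbf A^{k+1})^{\beta}_{\beta}\right|}.\]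
   Context: $\operatorname{Ind}\mathbf A$ is the smallest nonnegative $k$ with $\operatorname{rank}\mathbf A^{k+1}=\operatorname{rank}\mathbf A^{k}$; the Drazin inverse $\mathbf A^{D}$ is the unique $\mathbf X$ with $\mathbf A^{k+1}\mathbf X=\mathbf A^{k}$, $\mathbf X\mathbf A\mathbf X=\mathbf X$, $\mathbf A\mathbf X=\mathbf X\mathbf A$. $\mathbf M_{.i}(\mathbf c)$ denotes $\mathbf M$ with its $i$-th column replaced by $\mathbf c$. $J_{r,n}$ is the set of strictly increasing sequences of $r$ elements of $\{1,\dots,n\}$, $J_{r,n}\{i\}=\{\beta\in J_{r,n}:i\in\beta\}$, $\mathbf M^{\beta}_{\beta}$ is the principal submatrix indexed by $\beta$, $|\cdot|$ is the determinant. *)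

(* Defs.v *)
From HB Require Import structures.
From mathcomp Require Import all_boot all_order all_algebra.
Set Implicit Arguments. Unset Strict Implicit. Unset Printing Implicit Defensive.
Import GRing.Theory Num.Theory.
Local Open Scope ring_scope.

Definition is_index (R : fieldType) (n : nat) (A : 'M[R]_n) (k : nat) : Prop :=
  \rank (A ^+ k.+1) = \rank (A ^+ k) /\
  (forall k', (k' < k)%N -> \rank (A ^+ k'.+1) <> \rank (A ^+ k')).

Definition is_drazin_inv (R : fieldType) (n : nat) (A : 'M[R]_n) (X : 'M[R]_n) : Prop :=
  exists k, [/\ is_index A k, A ^+ k.+1 * X = A ^+ k, X * A * X = X & A * X = X * A].

Definition colrep (R : fieldType) (n : nat) (M : 'M[R]_n) (i : 'I_n) (c : 'cV[R]_n)
  : 'M[R]_n := \matrix_(p, q) if q == i then c p 0 else M p q.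

Definition pminor (R : fieldType) (n : nat) (M : 'M[R]_n) (beta : {set 'I_n}) : R :=
  \det (\matrix_(p < #|beta|, q < #|beta|)
          M (@enum_val _ (mem beta) p) (@enum_val _ (mem beta) q)).

(* Main.v *)
Require Import Defs.
From HB Require Import structures.
From mathcomp Require Import all_boot all_order all_algebra all_fingroup.
Set Implicit Arguments. Unset Strict Implicit. Unset Printing Implicit Defensive.
From mathcomp Require Import zify.
Import GRing.Theory Num.Theory.
Local Open Scope ring_scope.

Section Pad.
Variable R : comNzRingType.

Definition padI n (S : {set 'I_n}) (M : 'M[R]_n) : 'M[R]_n :=
  \matrix_(a, b) if (a \in S) && (b \in S) then M a b else (a == b)%:R.

Lemma det_zero_row n (A : 'M[R]_n) l : (forall b, A l b = 0) -> \det A = 0.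
Proof.
move=> H; rewrite (expand_det_row A l) big1 // => b _; by rewrite H mul0r.
Qed.

Lemma key_prod n (s : 'S_n) (T : {set 'I_n}) (d : 'I_n -> R) (M : 'M[R]_n) :
  \prod_i (if i \in T then (i == s i)%:R * d i else M i (s i)) =
  (\prod_(l in T) d l) * \prod_i padI (~: T) M i (s i).
Proof.
case: (boolP [forall i in T, s i == i]) => [/forall_inP fix_s | ].
  rewrite [LHS](bigID (mem T)) [X in _ * X](bigID (mem T)) /=.
  rewrite mulrA; congr (_ * _).
    rewrite [X in _ = _ * X]big1 ?mulr1; last first.
      by move=> i iT; rewrite /padI mxE !inE iT /= (eqP (fix_s i iT)) eqxx.
    by apply: eq_bigr => i iT; rewrite iT (eqP (fix_s i iT)) eqxx mul1r.
  apply: eq_bigr => i iT; rewrite (negbTE iT) /padI mxE !inE iT /=.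
  case: ifP => // /negbFE siT.
  have := fix_s _ siT => /eqP /perm_inj si; by move: iT; rewrite -{1}si siT.
rewrite negb_forall_in => /existsP [i /andP [iT si]].
rewrite (bigD1 i) //= iT eq_sym (negbTE si) !mul0r.
rewrite [X in _ * X](bigD1 i) //= /padI mxE !inE iT /= eq_sym (negbTE si).
by rewrite !(mul0r, mulr0).
Qed.

Lemma det_expand n (d : 'I_n -> R) (M : 'M[R]_n) :
  \det (\matrix_(a, b) ((a == b)%:R * d a + M a b)) =
  \sum_(S : {set 'I_n}) (\prod_(l in ~: S) d l) * \det (padI S M).
Proof.
rewrite /determinant.
transitivity (\sum_(s : 'S_n) (-1) ^+ s * \sum_(T in {set 'I_n})
   \prod_i (if i \in T then (i == s i)%:R * d i else M i (s i))).
  apply: eq_bigr => s _; congr (_ * _).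
  rewrite (eq_bigr (fun i => (i == s i)%:R * d i + M i (s i))); last by move=> i _; rewrite mxE.
  by rewrite bigA_distr.
rewrite [RHS](reindex_inj (@setC_inj _)) /=.
rewrite (eq_bigr (fun S : {set 'I_n} => \sum_(s : 'S_n) (\prod_(l in S) d l) * ((-1) ^+ s * \prod_i padI (~: S) M i (s i)))); last first.
  by move=> S _; rewrite setCK mulr_sumr.
rewrite exchange_big /=; apply: eq_bigr => s _; rewrite mulr_sumr; apply: eq_bigr => T _.
by rewrite key_prod mulrCA.
Qed.


Lemma padI_full n (S : {set 'I_n}) (M : 'M[R]_n) : (forall a, a \in S) -> padI S M = M.
Proof. by move=> H; apply/matrixP => a b; rewrite /padI mxE !H. Qed.

Lemma det_sub_full n (M : 'M[R]_n) m (f : 'I_m -> 'I_n) : injective f ->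
  (forall a, a \in f @: [set: 'I_m]) ->
  \det (\matrix_(p, q) M (f p) (f q)) = \det (padI (f @: [set: 'I_m]) M).
Proof.
move=> finj full; rewrite padI_full //.
have e : m = n.
  have := card_imset [set: 'I_m] finj; rewrite cardsT card_ord => <-.
  have -> : f @: [set: 'I_m] = [set: 'I_n] by apply/setP => a; rewrite full inE.
  by rewrite cardsT card_ord.
subst m.
have -> : \matrix_(p, q) M (f p) (f q) = row_perm (perm finj) (col_perm (perm finj) M).
  by apply/matrixP => p q; rewrite !mxE !permE.
rewrite row_permE col_permE !det_mulmx !det_perm odd_permV.
by case: (odd_perm (perm finj)); rewrite /= ?expr0 ?expr1 ?mul1r ?mulr1 ?mulrN ?mulNr ?mul1r ?mulr1 ?opprK.
Qed.

Lemma ord_two n (x y : 'I_n.+1) : x != y -> (0 < n)%N.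
Proof. by case: n x y => // x y; rewrite (ord1 x) (ord1 y) eqxx. Qed.

Lemma det_sub n (M : 'M[R]_n) m (f : 'I_m -> 'I_n) : injective f ->
  \det (\matrix_(p, q) M (f p) (f q)) = \det (padI (f @: [set: 'I_m]) M).
Proof.
elim: n M m f => [|n IH] M m f finj.
  by apply: det_sub_full => // a; case: a.
case: (pickP (fun a => a \notin f @: [set: 'I_m])) => [a aS | full]; last first.
  by apply: det_sub_full => // a; have := full a => /= /negbFE.
have fa p : f p != a.
  by apply/eqP => e; move: aS; rewrite -e imset_f ?inE.
case: m f finj fa aS => [|m] f finj fa aS.
  have -> : f @: [set: 'I_0] = set0 by apply/setP => b; rewrite inE; apply/imsetP => [[[]]].
  rewrite (_ : padI set0 M = 1%:M) ?det1; last first.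
    by apply/matrixP => b c; rewrite /padI !mxE inE.
  by rewrite det_mx00.
have n0 : (0 < n)%N := ord_two (fa ord0).
pose f' p := odflt (Ordinal n0) (unlift a (f p)).
have ff' p : f p = lift a (f' p).
  have fa' : a != f p by rewrite eq_sym.
  by rewrite /f'; case: (unlift_some fa') => b e1 e2; rewrite e2 /= -e1.
have f'inj : injective f' by move=> p q e; apply: finj; rewrite !ff' e.
rewrite (expand_det_row _ a) (bigD1 a) //= big1 ?addr0; last first.
  by move=> b ba; rewrite /padI mxE (negbTE aS) /= eq_sym (negbTE ba) mul0r.
rewrite /padI mxE (negbTE aS) eqxx mul1r /cofactor -signr_odd addnn odd_double mul1r.
have -> : \matrix_(p, q) M (f p) (f q) =
   \matrix_(p, q) (row' a (col' a M)) (f' p) (f' q).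
  by apply/matrixP => p q; rewrite !mxE !ff'.
rewrite (IH _ _ _ f'inj); congr (\det _); apply/matrixP => b c; rewrite !mxE.
have mem x : (lift a x \in f @: [set: 'I_m.+1]) = (x \in f' @: [set: 'I_m.+1]).
  apply/imsetP/imsetP => [[p _ e]|[p _ e]]; exists p => //.
    by apply: (@lift_inj _ a); rewrite -ff'.
  by rewrite e ff'.
by rewrite !mem (inj_eq lift_inj).
Qed.

End Pad.

Section Poly.
Variable F : fieldType.

Definition Lx n (N : 'M[F]_n) : 'M[{poly F}]_n :=
  \matrix_(a, b) ((a == b)%:R * 'X + map_mx polyC N a b).

Lemma LxE n (N : 'M[F]_n) : Lx N = 'X%:M + map_mx polyC N.
Proof. by apply/matrixP => a b; rewrite !mxE mulr_natl eq_sym. Qed.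

Lemma padI_map n S (N : 'M[F]_n) : padI S (map_mx polyC N) = map_mx polyC (padI S N).
Proof. by apply/matrixP => a b; rewrite /padI !mxE; case: ifP => // _; rewrite rmorph_nat. Qed.

Lemma det_padI_map n S (N : 'M[F]_n) :
  \det (padI S (map_mx polyC N)) = (\det (padI S N))%:P.
Proof. by rewrite padI_map det_map_mx. Qed.

Lemma detLx n (N : 'M[F]_n) : \det (Lx N) =
  \sum_(S : {set 'I_n}) 'X^(n - #|S|) * (\det (padI S N))%:P.
Proof.
rewrite /Lx det_expand; apply: eq_bigr => S _; rewrite det_padI_map prodr_const.
by have -> : #|~: S| = (n - #|S|)%N by rewrite cardsCs setCK card_ord.
Qed.

Lemma coef_sumX n (c : {set 'I_n} -> F) e :
  (\sum_(S : {set 'I_n}) 'X^(n - #|S|) * (c S)%:P)`_e =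
  \sum_(S : {set 'I_n} | (n - #|S|)%N == e) c S.
Proof.
rewrite coef_sum [RHS]big_mkcond /=. apply: eq_big => // S _.
by rewrite coefMC coefXn eq_sym; case: eqP => _; rewrite ?mul1r ?mul0r.
Qed.

Definition Lxi n (N : 'M[F]_n) (i : 'I_n) : 'M[{poly F}]_n :=
  \matrix_(a, b) ((a == b)%:R * (if a == i then 0 else 'X) + map_mx polyC N a b).

Lemma detLxi n (N : 'M[F]_n) i : \det (Lxi N i) =
  \sum_(S : {set 'I_n}) 'X^(n - #|S|) * (if i \in S then \det (padI S N) else 0)%:P.
Proof.
rewrite /Lxi det_expand; apply: eq_bigr => S _; rewrite det_padI_map.
case: (boolP (i \in S)) => iS.
  rewrite (eq_bigr (fun _ => 'X)); last first.
    by move=> l; rewrite inE => lS; case: eqP => // e; rewrite e iS in lS.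
  rewrite prodr_const.
  by have -> : #|~: S| = (n - #|S|)%N by rewrite cardsCs setCK card_ord.
by rewrite (bigD1 i) ?inE //= eqxx mul0r mul0r polyC0 mulr0.
Qed.

Lemma cramerLxi n (N : 'M[F]_n) i (c : 'cV[F]_n) :
  \det (Lxi (colrep N i c) i) = (\adj (Lx N) *m map_mx polyC c) i 0.
Proof.
rewrite (expand_det_col _ i) mxE; apply: eq_bigr => a _.
rewrite !mxE eqxx mulrC; congr (_ * _).
  rewrite /cofactor; congr (_ * \det _); apply/matrixP => x y; rewrite !mxE.
  have h : (lift i y == i) = false by rewrite eq_sym (negbTE (neq_lift _ _)).
  rewrite h; case: eqP => [->|_]; by rewrite ?h ?mul0r.
by case: eqP => [->|_]; rewrite ?mul0r ?mulr0 ?add0r.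
Qed.


Lemma pminor_padI n (M : 'M[F]_n) (beta : {set 'I_n}) : pminor M beta = \det (padI beta M).
Proof.
rewrite /pminor det_sub; last exact: enum_val_inj.
congr (\det (padI _ M)); apply/setP => a; apply/imsetP/idP => [[x _ ->]|aB].
  exact: enum_valP.
by exists (enum_rank_in aB a); rewrite ?inE // enum_rankK_in.
Qed.

Lemma adjV n (N : 'M[F]_n) m (Y : 'M[F]_(n, m)) :
  \adj (Lx N) *m map_mx polyC (N *m Y) =
  \det (Lx N) *: map_mx polyC Y - 'X *: (\adj (Lx N) *m map_mx polyC Y).
Proof.
have hN : map_mx polyC N = Lx N - 'X%:M by rewrite LxE addrAC subrr add0r.
rewrite map_mxM hN mulmxA mulmxBr mul_adj_mx mul_mx_scalar mulmxBl mul_scalar_mx.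
by rewrite scalemxAl.
Qed.

Definition V n (N : 'M[F]_n) m (Y : 'M[F]_(n, m)) s :=
  \adj (Lx N) *m map_mx polyC (N ^+ s *m Y).

Lemma VS n (N : 'M[F]_n) m (Y : 'M[F]_(n, m)) s a b :
  V N Y s.+1 a b = \det (Lx N) * ((N ^+ s *m Y) a b)%:P - 'X * V N Y s a b.
Proof. by rewrite /V exprS -mulmxE -mulmxA adjV !mxE. Qed.

Lemma Vvanish n (N : 'M[F]_n) m (Y : 'M[F]_(n, m)) t :
  (forall e, (e < t)%N -> (\det (Lx N))`_e = 0) ->
  forall e, (e < t)%N -> forall s, (e < s)%N -> forall a b, (V N Y s a b)`_e = 0.
Proof.
move=> ht; elim=> [|e IH] et [|s] // es a b; rewrite VS coefB coefMC coefXM ht ?mul0r //=.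
  by rewrite subr0.
by rewrite IH ?subr0 //; apply: ltnW.
Qed.

Lemma Vtop n (N : 'M[F]_n) m (Y : 'M[F]_(n, m)) t s a b :
  (forall e, (e < t)%N -> (\det (Lx N))`_e = 0) -> (t <= s)%N ->
  (V N Y s.+1 a b)`_t = (\det (Lx N))`_t * (N ^+ s *m Y) a b.
Proof.
move=> ht ts; rewrite VS coefB coefMC coefXM; case: t ht ts => [|t] ht ts /=.
  by rewrite subr0.
by rewrite (Vvanish Y ht) ?subr0 //; case: s ts.
Qed.


Lemma Lx_simil n (N Q L : 'M[F]_n) : L \in unitmx -> L *m Q = N *m L ->
  \det (Lx Q) = \det (Lx N).
Proof.
move=> Lu hLQ.
have h : map_mx polyC L *m Lx Q = Lx N *m map_mx polyC L.
  by rewrite !LxE mulmxDr mulmxDl mul_mx_scalar mul_scalar_mx -!map_mxM hLQ.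
have := congr1 determinant h; rewrite !det_mulmx det_map_mx [LHS]mulrC.
by apply: mulIf; rewrite polyC_eq0 -unitfE -unitmxE.
Qed.

Lemma padK_zero n r (W : 'M[F]_n) (S : {set 'I_n}) (l : 'I_n) : l \in S -> (r <= l)%N ->
  \det (padI S (pid_mx r *m W)) = 0.
Proof.
move=> lS rl; apply: (@det_zero_row _ _ _ l) => b; rewrite /padI mxE lS /=.
case: ifP => bS.
  rewrite mxE big1 // => c _; rewrite mxE.
  by rewrite ltnNge rl andbF mul0r.
by case: eqP => // e; rewrite e bS in lS.
Qed.

Lemma widen_inj r n (hr : (r <= n)%N) : injective (widen_ord hr).
Proof. by move=> x y e; apply: val_inj; exact: (congr1 val e). Qed.

Lemma mem_S0 r n (hr : (r <= n)%N) (l : 'I_n) :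
  (l \in widen_ord hr @: [set: 'I_r]) = (l < r)%N.
Proof.
apply/imsetP/idP => [[x _ ->]|lr] /=; first exact: ltn_ord.
by exists (Ordinal lr); rewrite ?inE //; apply: val_inj.
Qed.

Lemma card_S0 r n (hr : (r <= n)%N) : #|widen_ord hr @: [set: 'I_r]| = r.
Proof. by rewrite card_imset ?cardsT ?card_ord //; apply: widen_inj. Qed.

Lemma pcoefK n r (hr : (r <= n)%N) (W : 'M[F]_n) :
  (forall e, (e < n - r)%N -> (\det (Lx (pid_mx r *m W)))`_e = 0) /\
  (\det (Lx (pid_mx r *m W)))`_(n - r) =
     \det (padI (widen_ord hr @: [set: 'I_r]) (pid_mx r *m W)).
Proof.
set S0 := widen_ord hr @: [set: 'I_r].
have zero (S : {set 'I_n}) : ~~ (S \subset S0) -> \det (padI S (pid_mx r *m W)) = 0.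
  by case/subsetPn => l lS; rewrite mem_S0 -leqNgt => rl; apply: (padK_zero _ lS).
have small (S : {set 'I_n}) : S \subset S0 -> (#|S| <= r)%N.
  by move/subset_leq_card; rewrite card_S0.
have Sn (S : {set 'I_n}) : (#|S| <= n)%N by rewrite -[X in (_ <= X)%N](card_ord n) -cardsT subset_leq_card // subsetT.
split=> [e en|]; rewrite detLx coef_sumX.
  rewrite big1 // => S /eqP eS; apply: zero; apply/negP => /small; lia.
rewrite (bigD1 S0) /=; last by rewrite card_S0.
rewrite big1 ?addr0 // => S /andP [/eqP eS nS]; apply: zero; apply/negP => sub.
have cS : #|S| = #|S0|.
  by rewrite card_S0 -(subKn (Sn S)) eS subKn.
have /subset_cardP/(_ sub) h := cS.
by move: nS; rewrite (_ : S = S0) ?eqxx //; apply/setP.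
Qed.

Lemma pidL m n r (hr : (r <= n)%N) (X : 'M[F]_(n, m)) p b :
  ((pid_mx r : 'M_(r, n)) *m X) p b = X (widen_ord hr p) b.
Proof.
rewrite mxE (bigD1 (widen_ord hr p)) //= big1 => [|c cne]; rewrite mxE /=.
  by rewrite eqxx ltn_ord mul1r addr0.
suff -> : (p == c :> nat) = false by rewrite mul0r.
by apply/negbTE; apply: contra cne => /eqP e; apply/eqP/val_inj.
Qed.

Lemma pidR m n r (hr : (r <= n)%N) (X : 'M[F]_(m, n)) a q :
  (X *m (pid_mx r : 'M_(n, r))) a q = X a (widen_ord hr q).
Proof.
rewrite mxE (bigD1 (widen_ord hr q)) //= big1 => [|c cne]; rewrite mxE /=.
  by rewrite eqxx /= (leq_trans (ltn_ord q)) ?mulr1 ?addr0.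
suff -> : (c == q :> nat) = false by rewrite mulr0.
by apply/negbTE; apply: contra cne => /eqP e; apply/eqP/val_inj.
Qed.

Lemma pidLn n r (hr : (r <= n)%N) (X : 'M[F]_n) p b :
  ((pid_mx r : 'M_n) *m X) (widen_ord hr p) b = X (widen_ord hr p) b.
Proof.
rewrite mxE (bigD1 (widen_ord hr p)) //= big1 => [|c cne]; rewrite mxE /=.
  by rewrite eqxx ltn_ord mul1r addr0.
suff -> : (p == c :> nat) = false by rewrite mul0r.
by apply/negbTE; apply: contra cne => /eqP e; apply/eqP/val_inj.
Qed.

Lemma nzK n r (hr : (r <= n)%N) (W : 'M[F]_n) :
  \rank ((pid_mx r : 'M_n) *m W *m (pid_mx r : 'M_n)) = r ->
  \det (padI (widen_ord hr @: [set: 'I_r]) (pid_mx r *m W)) != 0.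
Proof.
move=> rk; rewrite -det_sub; last exact: widen_inj.
set N' := \matrix_(p, q) _.
have eN : N' = (pid_mx r : 'M_(r, n)) *m W *m (pid_mx r : 'M_(n, r)).
  by apply/matrixP => p q; rewrite [LHS]mxE pidLn pidR pidL.
have ep : (pid_mx r : 'M[F]_n) = (pid_mx r : 'M[F]_(n, r)) *m (pid_mx r : 'M[F]_(r, n)).
  by rewrite mul_pid_mx !minnn.
have : (r <= \rank N')%N.
  rewrite -{1}rk ep eN !mulmxA -(mulmxA (pid_mx r)).
  rewrite (leq_trans (mxrankM_maxl _ _)) // -mulmxA -mulmxA.
  by rewrite (leq_trans (mxrankM_maxr _ _)) // mulmxA.
move=> h; have : row_free N' by rewrite /row_free eqn_leq rank_leq_row.
by rewrite row_free_unit unitmxE unitfE.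
Qed.

End Poly.



Lemma drazin_pow1 (R0 : pzRingType) (a q : R0) k :
  a ^+ k.+1 * q = a ^+ k -> forall j, a ^+ (k + j) * q ^+ j = a ^+ k.
Proof.
move=> D1; elim=> [|j IH]; first by rewrite addn0 expr0 mulr1.
rewrite (_ : (k + j.+1 = j + k.+1)%N); last by rewrite !addnS addnC.
by rewrite exprD [q ^+ _.+1]exprS mulrA -(mulrA (a ^+ j)) D1 -exprD addnC IH.
Qed.

Lemma drazin_pow2 (R0 : pzRingType) (a q : R0) :
  q * a * q = q -> a * q = q * a -> forall j, q = a ^+ j * q ^+ j.+1.
Proof.
move=> D2 D3; elim=> [|j IH]; first by rewrite expr0 mul1r expr1.
have h : a * q ^+ j.+2 = q ^+ j.+1 by rewrite 2!exprS mulrA D3 mulrA D2.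
by rewrite exprSr -mulrA h -IH.
Qed.

Theorem theorem4p5 (C : numClosedFieldType) (n m k r : nat)
  (A : 'M[C]_n) (B : 'M[C]_(n, m)) (AD : 'M[C]_n) :
  is_index A k ->
  \rank (A ^+ k) = r ->
  is_drazin_inv A AD ->
  let Bhat := A ^+ k *m B in
  let X := AD *m B in
  forall (i : 'I_n) (j : 'I_m),
    X i j =
      (\sum_(beta : {set 'I_n} | (#|beta| == r) && (i \in beta))
          pminor (colrep (A ^+ k.+1) i (col j Bhat)) beta) /
      (\sum_(beta : {set 'I_n} | #|beta| == r) pminor (A ^+ k.+1) beta).
Proof.
move=> idx rkA [k' [idx' D1 D2 D3]] Bhat X i j.
have kk : k' = k.
  case: idx => e1 min1; case: idx' => e2 min2.
  apply/eqP; rewrite eqn_leq; apply/andP; split; rewrite leqNgt; apply/negP => h.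
    exact: (min2 _ h e1).
  exact: (min1 _ h e2).
subst k'.
have rkpow q : \rank (A ^+ (k + q)) = r.
  apply/eqP; rewrite eqn_leq; apply/andP; split.
    by rewrite -rkA exprD -mulmxE mxrankM_maxl.
  by rewrite -{1}rkA -(drazin_pow1 D1 q) -mulmxE mxrankM_maxl.
set M := A ^+ k.+1.
have rkM : \rank M = r by rewrite /M -addn1 rkpow.
have rkMM : \rank (M *m M) = r.
  by rewrite mulmxE /M -exprD addSn -addnS rkpow.
have hr : (r <= n)%N by rewrite -rkM rank_leq_row.
set L := col_ebase M; set U := row_ebase M.
have hM : M = L *m pid_mx r *m U by rewrite -rkM mulmx_ebase.
set W := U *m L; set K := (pid_mx r : 'M[C]_n) *m W.
have simil : \det (Lx K) = \det (Lx M).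
  apply: (Lx_simil (col_ebase_unit M)).
  by rewrite /K /W {2}hM !mulmxA.
have rkW : \rank ((pid_mx r : 'M_n) *m W *m (pid_mx r : 'M_n)) = r.
  have eMM : M *m M = L *m ((pid_mx r : 'M_n) *m W *m (pid_mx r : 'M_n)) *m U.
    by rewrite /W {1 2}hM !mulmxA.
  have Lfull : row_full L by rewrite row_full_unit col_ebase_unit.
  rewrite -[RHS]rkMM eMM [in RHS]mxrankMfree ?row_free_unit ?row_ebase_unit //.
  by rewrite [in RHS](eqmxMfull _ Lfull).
have [pv pK] := pcoefK hr W.
have pv' e : (e < n - r)%N -> (\det (Lx M))`_e = 0 by rewrite -simil; apply: pv.
have dnz : (\det (Lx M))`_(n - r) != 0 by rewrite -simil pK; apply: nzK.
have Sn (S : {set 'I_n}) : (#|S| <= n)%N.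
  by rewrite -[X in (_ <= X)%N](card_ord n) -cardsT subset_leq_card // subsetT.
have condE (S : {set 'I_n}) : ((n - #|S|)%N == (n - r)%N) = (#|S| == r).
  apply/eqP/eqP => [e|->] //.
  by rewrite -(subKn (Sn S)) e subKn.
have hden : \sum_(beta : {set 'I_n} | #|beta| == r) pminor M beta = (\det (Lx M))`_(n - r).
  rewrite detLx coef_sumX; apply: eq_big => [S|S _]; first by rewrite condE.
  exact: pminor_padI.
set Z := AD ^+ (k.+1 * n).+1 *m B.
have hX : X = M ^+ n *m Z.
  by rewrite /X /Z mulmxA mulmxE /M -exprM -(drazin_pow2 D2 D3).
have hB : Bhat = M ^+ n.+1 *m Z.
  by rewrite /Bhat -D1 -mulmxE -mulmxA -/X hX mulmxA mulmxE -exprS.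
have hnum : \sum_(beta : {set 'I_n} | (#|beta| == r) && (i \in beta))
          pminor (colrep M i (col j Bhat)) beta = (\det (Lx M))`_(n - r) * X i j.
  transitivity ((\det (Lxi (colrep M i (col j Bhat)) i))`_(n - r)).
    rewrite detLxi coef_sumX big_mkcondr /=; apply: eq_big => [S|S _].
      by rewrite condE.
    by rewrite pminor_padI.
  rewrite cramerLxi.
  have -> : (\adj (Lx M) *m map_mx polyC (col j Bhat)) i 0 = V M Z n.+1 i j.
    by rewrite /V -hB !mxE; apply: eq_bigr => a _; rewrite !mxE.
  by rewrite (Vtop _ _ _ pv') ?leq_subr // hX.
rewrite hnum hden mulrC mulKf //.
Qed.
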